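(* Let $n>3$ be a natural number, $\varepsilon\in(0,0.5)$ and $\delta\in(0,0.5)$. Let $P(\delta)=(p_{i,j})_{i,j=1}^n$ be the $n\times n$ stochastic matrix with $p_{i,i}=1-\varepsilon$ for all $i$; $p_{1,2}=\varepsilon$; $p_{i,i+1}=(1-\delta)\varepsilon$ for $i=2,\ldots,n-1$; $p_{i+1,i}=\delta\varepsilon$ for $i=1,\ldots,n-2$; $p_{n,n-1}=\varepsilon$; and all other entries equal to $0$. Let $\pi^*(\delta)=(\pi^*_k(\delta))_{k=1}^n$ be the unique probability (row) vector satisfying $\pi^*(\delta)P(\delta)=\pi^*(\delta)$, and let $E_{\pi^*}(\delta)=\sum_{k=1}^n k\,\pi^*_k(\delta)$. Then $$E_{\pi^*}(\delta)=\frac{\delta^{n-2}(2\delta-1)}{2\delta^{n-1}-2(1-\delta)^{n-1}}+\frac{\delta^{n-1}(2\delta-1)}{2(1-\delta)^2(\delta^{n-1}-(1-\delta)^{n-1})}\sum_{k=2}^{n-1}k\left(\frac{1-\delta}{\delta}\right)^k+n\,\frac{(1-\delta)^{n-2}(2\delta-1)}{2\delta^{n-1}-2(1-\delta)^{n-1}},$$ and consequently $$\lim_{\delta\to0^+}E_{\pi^*}(\delta)=\frac{2n-1}{2}.$$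
   Context: $P(\delta)$ is the transition matrix of a Markov chain on states $s_1,\ldots,s_n$ (probability distributions are row vectors multiplied on the left of $P$); $\pi^*(\delta)$ is its stationary distribution and $E_{\pi^*}$ is called the expected state. *)

(* Defs.v *)
From HB Require Import structures.
From mathcomp Require Import all_boot all_order all_algebra.
From mathcomp Require Import all_classical all_reals all_analysis.
Set Implicit Arguments. Unset Strict Implicit. Unset Printing Implicit Defensive.
Import Order.TTheory GRing.Theory Num.Theory.
Local Open Scope ring_scope.

(* States s_1..s_n are represented by i : 'I_n with s_k <-> i = k-1. *)
Definition Pmat (R : ringType) (n : nat) (eps delta : R) : 'M[R]_n :=
  \matrix_(i < n, j < n)
    if (i : nat) == (j : nat) then 1 - eps
    else if ((i : nat) == 0%N) && ((j : nat) == 1%N) then eps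
    else if [&& (1 <= (i : nat))%N, ((i : nat) <= n - 2)%N & ((j : nat) == (i : nat).+1)]
      then (1 - delta) * eps                                      (* p_{k,k+1}, k=2..n-1 *)
    else if ((j : nat) <= n - 3)%N && ((i : nat) == (j : nat).+1)
      then delta * eps                                            (* p_{k+1,k}, k=1..n-2 *)
    else if ((i : nat) == n.-1) && ((j : nat) == n.-2) then eps
    else 0.

Definition stationary_prob (R : numDomainType) (n : nat) (P : 'M[R]_n) (pi : 'rV[R]_n) : Prop :=
  (forall i, 0 <= pi 0 i) /\ \sum_(i < n) pi 0 i = 1 /\ pi *m P = pi.

Definition expected_state (R : ringType) (n : nat) (pi : 'rV[R]_n) : R :=
  \sum_(i < n) ((i : nat).+1)%:R * pi 0 i.

Definition E_formula (R : fieldType) (n : nat) (delta : R) : R :=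
  delta ^+ (n - 2) * (2 * delta - 1) / (2 * delta ^+ (n - 1) - 2 * (1 - delta) ^+ (n - 1))
  + delta ^+ (n - 1) * (2 * delta - 1)
      / (2 * (1 - delta) ^+ 2 * (delta ^+ (n - 1) - (1 - delta) ^+ (n - 1)))
      * \sum_(2 <= k < n) k%:R * ((1 - delta) / delta) ^+ k
  + n%:R * ((1 - delta) ^+ (n - 2) * (2 * delta - 1)
      / (2 * delta ^+ (n - 1) - 2 * (1 - delta) ^+ (n - 1))).

(* Main.v *)
Require Import Defs.
From HB Require Import structures.
From mathcomp Require Import all_boot all_order all_algebra.
From mathcomp Require Import all_classical all_reals all_analysis.
From mathcomp Require Import zify ring lra.
Import Order.TTheory GRing.Theory Num.Theory.
Import numFieldNormedType.Exports.
Local Open Scope classical_set_scope.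
Local Open Scope ring_scope.
Set Implicit Arguments. Unset Strict Implicit. Unset Printing Implicit Defensive.

Definition pe (R : realType) (n : nat) (eps delta : R) (i j : nat) : R :=
    if i == j then 1 - eps
    else if (i == 0%N) && (j == 1%N) then eps
    else if [&& (1 <= i)%N, (i <= n - 2)%N & (j == i.+1)]
      then (1 - delta) * eps
    else if (j <= n - 3)%N && (i == j.+1)
      then delta * eps
    else if (i == n.-1) && (j == n.-2) then eps
    else 0.

Lemma PmatE (R : realType) n (eps d : R) (i j : 'I_n) :
  Pmat n eps d i j = pe n eps d i j.
Proof. by rewrite mxE. Qed.

Lemma pe_far (R : realType) n (eps d : R) i j :
  (3 < n)%N -> (i.+1 < j)%N || (j.+1 < i)%N -> pe n eps d i j = 0.
Proof.
move=> hn h; rewrite /pe.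
have -> : (i == j) = false by apply/eqP; lia.
have -> : (i == 0%N) && (j == 1%N) = false by apply/negbTE/negP => /andP[/eqP ? /eqP ?]; lia.
have -> : [&& (1 <= i)%N, (i <= n - 2)%N & (j == i.+1)] = false.
  by apply/negbTE/negP => /and3P[_ _ /eqP ?]; lia.
have -> : (j <= n - 3)%N && (i == j.+1) = false.
  by apply/negbTE/negP => /andP[_ /eqP ?]; lia.
have -> : (i == n.-1) && (j == n.-2) = false.
  by apply/negbTE/negP => /andP[/eqP ? /eqP ?]; lia.
by [].
Qed.

Lemma pe_diag (R : realType) n (eps d : R) j : pe n eps d j j = 1 - eps.
Proof. by rewrite /pe eqxx. Qed.

Lemma up0 (R : realType) n (eps d : R) : (3 < n)%N -> pe n eps d 0%N 1%N = eps.
Proof. by move=> hn; rewrite /pe. Qed.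

Lemma upS (R : realType) n (eps d : R) j : (3 < n)%N -> (0 < j)%N -> (j <= n - 2)%N ->
  pe n eps d j j.+1 = (1 - d) * eps.
Proof.
move=> hn h1 h2; rewrite /pe.
have -> : (j == j.+1) = false by apply/eqP; lia.
have -> : (j == 0%N) = false by apply/eqP; lia.
by rewrite h1 h2 eqxx.
Qed.

Lemma down_lt (R : realType) n (eps d : R) j : (3 < n)%N -> (j <= n - 3)%N ->
  pe n eps d j.+1 j = d * eps.
Proof.
move=> hn h; rewrite /pe.
have -> : (j.+1 == j) = false by apply/eqP; lia.
have -> : [&& (1 <= j.+1)%N, (j.+1 <= n - 2)%N & (j == j.+2)] = false.
  by apply/negbTE/negP => /and3P[_ _ /eqP ?]; lia.
by rewrite h eqxx.
Qed.

Lemma down_last (R : realType) n (eps d : R) k : (3 < n)%N -> k.+2 = n ->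
  pe n eps d k.+1 k = eps.
Proof.
move=> hn hk; rewrite /pe.
have -> : (k.+1 == k) = false by apply/eqP; lia.
have -> : [&& (1 <= k.+1)%N, (k.+1 <= n - 2)%N & (k == k.+2)] = false.
  by apply/negbTE/negP => /and3P[_ _ /eqP ?]; lia.
have -> : (k <= n - 3)%N = false by apply/negbTE; lia.
have -> : (k.+1 == n.-1) by apply/eqP; lia.
have -> : (k == n.-2) by apply/eqP; lia.
by [].
Qed.

Definition wt (R : realType) n (d : R) (k : nat) : R := d ^+ (n - 2 - k) * (1 - d) ^+ (k - 1).
Definition up (R : realType) n (eps d : R) j := pe n eps d j j.+1.
Definition down (R : realType) n (eps d : R) j := pe n eps d j.+1 j.

Lemma balance (R : realType) n (eps d : R) j : (3 < n)%N -> (j.+1 < n)%N ->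
  wt n d j * up n eps d j = wt n d j.+1 * down n eps d j.
Proof.
move=> hn hj; rewrite /wt /up /down.
case: j hj => [|j] hj.
  rewrite up0 // down_lt //; try lia.
  have -> : (n - 2 - 0 = (n - 2 - 1).+1)%N by lia.
  by rewrite exprS; ring.
have [hl|hl] := leqP j.+1 (n - 3).
  rewrite upS //; try lia.
  rewrite down_lt //.
  have -> : (n - 2 - j.+1 = (n - 2 - j.+2).+1)%N by lia.
  have -> : (j.+2 - 1 = (j.+1 - 1).+1)%N by lia.
  by rewrite !exprS; ring.
rewrite upS //; try lia.
rewrite (@down_last _ _ _ _ j.+1) //; try lia.
have -> : (n - 2 - j.+1 = 0)%N by lia.
have -> : (n - 2 - j.+2 = 0)%N by lia.
have -> : (j.+2 - 1 = (j.+1 - 1).+1)%N by lia.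
by rewrite !exprS; ring.
Qed.

Lemma sum_if_eq (R : realType) (F : nat -> R) a n :
  \sum_(0 <= k < n) (if k == a then F k else 0) = if (a < n)%N then F a else 0.
Proof.
elim: n => [|n IH]; first by rewrite big_geq.
rewrite big_nat_recr //= IH.
have [h|h|h] := ltngtP a n.
- by rewrite (_ : (a < n.+1)%N) ?addr0 //; lia.
- by rewrite (_ : (a < n.+1)%N = false) ?addr0 //; apply/negbTE; lia.
- by subst a; rewrite add0r ltnSn.
Qed.

Lemma col_sum (R : realType) n (eps d : R) (q : nat -> R) j : (3 < n)%N -> (j < n)%N ->
  \sum_(0 <= k < n) q k * pe n eps d k j =
  (if j is j'.+1 then q j' * up n eps d j' else 0) + q j * (1 - eps)
  + (if (j.+1 < n)%N then q j.+1 * down n eps d j else 0).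
Proof.
move=> hn hj.
have E : forall k, q k * pe n eps d k j =
   (if k.+1 == j then q k * pe n eps d k j else 0) + (if k == j then q k * pe n eps d k j else 0)
   + (if k == j.+1 then q k * pe n eps d k j else 0).
  move=> k; have [h|h|h] := ltngtP k j; do 2 (case: eqP => ?);
    rewrite ?addr0 ?add0r //; try (exfalso; lia); try subst;
    try (rewrite pe_far ?mulr0 //; lia).
rewrite (eq_bigr _ (fun k _ => E k)) !big_split /= sum_if_eq sum_if_eq hj pe_diag.
congr (_ + _ + _).
case: j hj {E} => [|j] hj.
  by rewrite big1 // => k _.
under eq_bigr do rewrite eqSS.
by rewrite sum_if_eq ltnW.
Qed.

Definition colEq (R : realType) n (eps d : R) (q : nat -> R) j :=
  (if j is j'.+1 then q j' * up n eps d j' else 0) + q j * (1 - eps)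
  + (if (j.+1 < n)%N then q j.+1 * down n eps d j else 0) = q j.

Lemma w_col (R : realType) n (eps d c : R) j : (3 < n)%N -> (j < n)%N ->
  colEq n eps d (fun k => c * wt n d k) j.
Proof.
move=> hn hj; rewrite /colEq.
case: j hj => [|j] hj /=.
  rewrite (_ : (1 < n)%N) //; try lia.
  rewrite -[c * wt n d 1%N * _]mulrA -balance //; try lia; rewrite /up up0 //; ring.
rewrite -[c * wt n d j * _]mulrA balance //; try lia.
case: ifP => h.
  rewrite -[c * wt n d j.+2 * _]mulrA -(@balance _ n eps d j.+1) //.
  have U : up n eps d j.+1 = (1 - d) * eps by apply: upS => //; lia.
  have D : down n eps d j = d * eps by apply: down_lt => //; lia.
  rewrite U D; ring.
have D : down n eps d j = eps by apply: down_last => //; lia.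
rewrite D; ring.
Qed.

Lemma flux (R : realType) n (eps d : R) (q : nat -> R) : (3 < n)%N ->
  (forall j, (j < n)%N -> colEq n eps d q j) ->
  forall j, (j.+1 < n)%N -> q j * up n eps d j = q j.+1 * down n eps d j.
Proof.
move=> hn H; elim => [|j IH] hj.
  have := H 0%N (ltnW hj); rewrite /colEq /= hj add0r /up up0 // => E.
  lra.
have := H j.+1 (ltnW hj); rewrite /colEq /= hj => E.
have := IH (ltnW hj) => {}IH.
have U : up n eps d j.+1 = (1 - d) * eps by apply: upS => //; lia.
have D : down n eps d j = d * eps by apply: down_lt => //; lia.
rewrite U; rewrite D in IH E; lra.
Qed.

Lemma down_neq0 (R : realType) n (eps d : R) k : (3 < n)%N -> (k.+1 < n)%N ->
  0 < d -> 0 < eps -> down n eps d k != 0.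
Proof.
move=> hn hk hd he; rewrite /down.
have [h|h] := leqP k (n - 3).
  by rewrite down_lt // mulf_neq0 // gt_eqF.
by rewrite (@down_last _ _ _ _ k) ?gt_eqF //; lia.
Qed.

Lemma propor (R : realType) n (eps d : R) (q : nat -> R) : (3 < n)%N ->
  0 < d -> 0 < eps ->
  (forall j, (j < n)%N -> colEq n eps d q j) ->
  forall k, (k < n)%N -> q k * wt n d 0%N = q 0%N * wt n d k.
Proof.
move=> hn hd he H; elim => [|k IH] hk; first by [].
apply: (mulIf (down_neq0 hn hk hd he)).
rewrite mulrAC -(flux hn H hk) -[q 0%N * _ * _]mulrA -balance //; try lia.
rewrite mulrA -IH; first ring.
exact: ltnW.
Qed.

Definition Sw (R : realType) n (d : R) := \sum_(0 <= k < n) wt n d k.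

Lemma wt_ge0 (R : realType) n (d : R) k : 0 <= d <= 1 -> 0 <= wt n d k.
Proof. by case/andP=> h0 h1; rewrite /wt mulr_ge0 // exprn_ge0 // subr_ge0. Qed.

Lemma wt0_gt0 (R : realType) n (d : R) : 0 < d < 1 -> 0 < wt n d 0%N.
Proof. by case/andP=> h0 h1; rewrite /wt mulr_gt0 // exprn_gt0 // subr_gt0. Qed.

Lemma Sw_gt0 (R : realType) n (d : R) : (0 < n)%N -> 0 < d < 1 -> 0 < Sw n d.
Proof.
move=> hn hd; rewrite /Sw big_ltn //.
apply: (lt_le_trans (wt0_gt0 n hd)); rewrite lerDl sumr_ge0 // => k _.
by apply: wt_ge0; case/andP: hd => h0 h1; rewrite ltW ?ltW.
Qed.

Lemma stat_char (R : realType) m (eps d : R) (pi : 'rV[R]_m.+1) : (3 < m.+1)%N ->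
  0 < d < 1 -> 0 < eps ->
  stationary_prob (Pmat m.+1 eps d) pi -> forall i : 'I_m.+1, pi 0 i = wt m.+1 d i / Sw m.+1 d.
Proof.
move=> hn hd he [_ [hs hst]].
have hd0 : 0 < d by case/andP: hd.
set q := fun k : nat => pi 0 (inord k).
have Hq : forall i : 'I_m.+1, pi 0 i = q i by move=> i; rewrite /q inord_val.
have Hc : forall j, (j < m.+1)%N -> colEq m.+1 eps d q j.
  move=> j hj; rewrite /colEq -col_sum //.
  have := congr1 (fun M : 'rV[R]_m.+1 => M 0 (inord j)) hst => /= E.
  rewrite [LHS]mxE in E.
  rewrite {2}/q -E big_mkord; apply: eq_bigr => i _.
  by rewrite PmatE inordK // Hq.
have Hsum : \sum_(0 <= k < m.+1) q k = 1.
  by rewrite big_mkord -hs; apply: eq_bigr => i _; rewrite Hq.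
have P := propor hn hd0 he Hc.
have w0S : wt m.+1 d 0%N = q 0%N * Sw m.+1 d.
  rewrite /Sw big_distrr /=.
  transitivity (\sum_(0 <= k < m.+1) q k * wt m.+1 d 0%N).
    by rewrite -big_distrl /= Hsum mul1r.
  by apply: eq_big_nat => k hk; apply: P.
have hw0 : wt m.+1 d 0%N != 0 by rewrite gt_eqF // wt0_gt0.
have hS : Sw m.+1 d != 0 by rewrite gt_eqF // Sw_gt0.
move=> i; rewrite Hq; apply: (mulIf hw0); rewrite P // w0S; field.
exact: hS.
Qed.

Lemma stat_exists (R : realType) n (eps d : R) : (3 < n)%N ->
  0 < d < 1 -> 0 < eps ->
  stationary_prob (Pmat n eps d) (\row_(i < n) (wt n d i / Sw n d)).
Proof.
move=> hn hd he.
have hS := Sw_gt0 (ltnW (ltnW (ltnW hn))) hd.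
have hd' : 0 <= d <= 1 by case/andP: hd => h0 h1; rewrite !ltW.
split; [|split].
- by move=> i; rewrite mxE divr_ge0 ?wt_ge0 // ltW.
- under eq_bigr do rewrite mxE.
  by rewrite -big_distrl /= -(big_mkord xpredT (wt n d)) -/(Sw n d) divff // gt_eqF.
- apply/rowP => j; rewrite [LHS]mxE [RHS]mxE.
  have := @w_col R n eps d (Sw n d)^-1 j hn (ltn_ord j); rewrite /colEq -col_sum //.
  rewrite [RHS]mulrC => <-; rewrite (big_mkord xpredT (fun k => (Sw n d)^-1 * wt n d k * pe n eps d k j)).
  by apply: eq_bigr => i _; rewrite mxE PmatE; ring.
Qed.

Lemma Sw_closed (R : realType) m (d : R) :
  Sw m.+4 d * (1 - 2 * d) = 2 * ((1 - d) ^+ m.+3 - d ^+ m.+3).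
Proof.
rewrite /Sw big_nat_recr //= big_ltn // big_add1 /=.
have HX := subrXX d (1 - d) m.+2.
have -> : \sum_(0 <= i < m.+2) wt m.+4 d i.+1 =
          \sum_(i < m.+2) d ^+ ((m.+2).-1 - i) * (1 - d) ^+ i.
  rewrite big_mkord; apply: eq_bigr => i _; rewrite /wt.
  congr (_ ^+ _ * _ ^+ _); lia.
move: HX; set A := \sum_(i < m.+2) _ => HX.
rewrite /wt.
have -> : (m.+4 - 2 - 0 = m.+2)%N by lia.
have -> : (m.+4 - 2 - m.+3 = 0)%N by lia.
have -> : (m.+3 - 1 = m.+2)%N by lia.
have -> : (0 - 1 = 0)%N by lia.
rewrite !expr0 !mulr1 !mul1r !(exprS _ m.+2).
lra.
Qed.


Lemma exp_eq (R : realType) m (d : R) : 0 < d < 1 / 2 ->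
  \sum_(i < m.+4) ((i : nat).+1)%:R * (wt m.+4 d i / Sw m.+4 d) = E_formula m.+4 d.
Proof.
move=> /andP[hd0 hd1].
have hS : 0 < Sw m.+4 d by apply: Sw_gt0 => //; apply/andP; split; lra.
have hSc := Sw_closed m d.
set S := Sw m.+4 d in hS hSc *.
have hd1' : 1 - d != 0 by apply: lt0r_neq0; lra.
have hdn : d != 0 by apply: lt0r_neq0.
have hS0 : S != 0 by apply: lt0r_neq0.
have h2d : 2 * d - 1 != 0 by apply: ltr0_neq0; lra.
have hDS : 2 * d ^+ m.+3 - 2 * (1 - d) ^+ m.+3 = S * (2 * d - 1) by lra.
have hD : 2 * d ^+ m.+3 - 2 * (1 - d) ^+ m.+3 != 0 by rewrite hDS mulf_neq0.
set K := (2 * d - 1) / (2 * d ^+ m.+3 - 2 * (1 - d) ^+ m.+3).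
have KS : S^-1 = K.
  by rewrite /K hDS; field; rewrite h2d hS0.
transitivity (K * \sum_(0 <= k < m.+4) (k.+1)%:R * wt m.+4 d k).
  rewrite big_mkord mulr_sumr; apply: eq_bigr => i _; rewrite -KS; ring.
rewrite /E_formula big_add1 /= big_nat_recr //= big_ltn //.
have -> : (m.+4 - 2 = m.+2)%N by lia.
have -> : (m.+4 - 1 = m.+3)%N by lia.
set coef := d ^+ m.+3 * (2 * d - 1) / (2 * (1 - d) ^+ 2 * (d ^+ m.+3 - (1 - d) ^+ m.+3)).
have Hmid : coef * \sum_(1 <= i < m.+3) (i.+1)%:R * ((1 - d) / d) ^+ i.+1 =
            K * \sum_(1 <= i < m.+3) (i.+1)%:R * wt m.+4 d i.
  rewrite !mulr_sumr; apply: eq_big_nat => i /andP[hi1 hi2].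
  case: i hi1 hi2 => [//|j] _ hj.
  have E1 : d ^+ m.+3 = d ^+ (m.+1 - j) * d ^+ j.+2 by rewrite -exprD; congr (_ ^+ _); lia.
  have E2 : ((1 - d) / d) ^+ j.+2 = (1 - d) ^+ j * (1 - d) ^+ 2 / d ^+ j.+2
    by rewrite expr_div_n -exprD addn2.
  have E3 : wt m.+4 d j.+1 = d ^+ (m.+1 - j) * (1 - d) ^+ j.
    by rewrite /wt; congr (_ ^+ _ * _ ^+ _); lia.
  have hZ : d ^+ j.+2 != 0 by apply: expf_neq0.
  move: hD; rewrite E2 E3 /coef /K E1.
  set P := d ^+ (m.+1 - j); set Z := d ^+ j.+2; set Y := (1 - d) ^+ j; set V := (1 - d) ^+ m.+3.
  move=> hD.
  have hPV : P * Z - V != 0 by apply: contraNneq hD => h; rewrite -mulrBr h mulr0.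
  by field; rewrite hD hZ hPV hd1'.
rewrite Hmid.
have -> : wt m.+4 d 0%N = d ^+ m.+2.
  rewrite /wt.
  have -> : (m.+4 - 2 - 0 = m.+2)%N by lia.
  have -> : (0 - 1 = 0)%N by lia.
  by rewrite expr0 mulr1.
have -> : wt m.+4 d m.+3 = (1 - d) ^+ m.+2.
  rewrite /wt.
  have -> : (m.+4 - 2 - m.+3 = 0)%N by lia.
  have -> : (m.+3 - 1 = m.+2)%N by lia.
  by rewrite expr0 mul1r.
rewrite /K.
set D := 2 * d ^+ m.+3 - 2 * (1 - d) ^+ m.+3.
set T := \sum_(1 <= i < m.+3) _.
set X := d ^+ m.+2. set Y := (1 - d) ^+ m.+2.
ring.
Qed.

Definition Gnum (R : realType) m (d : R) := \sum_(0 <= k < m.+4) (k.+1)%:R * wt m.+4 d k.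

Definition wP (R : realType) n k : {poly R} := 'X^(n - 2 - k) * (1 - 'X) ^+ (k - 1).

Lemma wP_horner (R : realType) n k (x : R) : (wP R n k).[x] = wt n x k.
Proof. by rewrite /wP /wt hornerM hornerXn horner_exp hornerD hornerN hornerX hornerC. Qed.

Lemma wt_at0 (R : realType) m k : (k < m.+2)%N -> wt m.+4 (0:R) k = 0.
Proof.
move=> hk; rewrite /wt expr0n (_ : (m.+4 - 2 - k == 0)%N = false) ?mul0r //.
apply/negbTE; lia.
Qed.

Lemma wt_at0a (R : realType) m : wt m.+4 (0:R) m.+2 = 1.
Proof.
rewrite /wt (_ : (m.+4 - 2 - m.+2 = 0)%N); last by lia.
by rewrite expr0 mul1r subr0 expr1n.
Qed.

Lemma wt_at0b (R : realType) m : wt m.+4 (0:R) m.+3 = 1.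
Proof.
rewrite /wt (_ : (m.+4 - 2 - m.+3 = 0)%N); last by lia.
by rewrite expr0 mul1r subr0 expr1n.
Qed.

Lemma Sw0 (R : realType) m : Sw m.+4 (0:R) = 2.
Proof.
rewrite /Sw big_nat_recr // big_nat_recr //= big_nat_cond big1 ?add0r ?wt_at0a ?wt_at0b //.
by move=> k /andP[/andP[_ hk] _]; exact: wt_at0.
Qed.

Lemma Gnum0 (R : realType) m : Gnum m (0:R) = (m.+3)%:R + (m.+4)%:R.
Proof.
rewrite /Gnum big_nat_recr // big_nat_recr //= big_nat_cond big1 ?add0r ?wt_at0a ?wt_at0b ?mulr1 //.
by move=> k /andP[/andP[_ hk] _]; rewrite wt_at0 ?mulr0.
Qed.

Lemma lim_val (R : realType) m : (2 * (m.+4)%:R - 1) / 2 = Gnum m (0:R) / Sw m.+4 0 :> R.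
Proof. rewrite Gnum0 Sw0; congr (_ / _); rewrite -!natr1 ?natrD; ring. Qed.

Lemma G_cvg (R : realType) m :
  (fun x : R => Gnum m x / Sw m.+4 x) @ (0 : R) --> Gnum m 0 / Sw m.+4 0.
Proof.
set NP := \sum_(0 <= k < m.+4) (k.+1)%:R *: wP R m.+4 k.
set DP := \sum_(0 <= k < m.+4) wP R m.+4 k.
have hN : forall x, Gnum m x = NP.[x].
  by move=> x; rewrite /NP horner_sum; apply: eq_bigr => k _; rewrite hornerZ wP_horner.
have hD : forall x, Sw m.+4 x = DP.[x].
  by move=> x; rewrite /DP horner_sum; apply: eq_bigr => k _; rewrite wP_horner.
have hS0 : Sw m.+4 (0 : R) != 0 by rewrite Sw0.
have hS0' : DP.[0] != 0 by rewrite -hD.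
have H := cvgM (@continuous_horner _ NP 0) (cvgV hS0' (@continuous_horner _ DP 0)).
have -> : Gnum m 0 / Sw m.+4 0 = NP.[0] * DP.[0]^-1 by rewrite hN hD.
have -> : (fun x : R => Gnum m x / Sw m.+4 x) = (fun x => NP.[x] * (DP.[x])^-1).
  by apply/funext => x; rewrite hN hD.
exact: H.
Qed.
Theorem theorem3p2 (R : realType) (n : nat) (eps delta : R) :
  (3 < n)%N -> 0 < eps < 1 / 2 -> 0 < delta < 1 / 2 ->
  (exists! pi : 'rV[R]_n, stationary_prob (Pmat n eps delta) pi) /\
  (forall pi : 'rV[R]_n, stationary_prob (Pmat n eps delta) pi ->
     expected_state pi = E_formula n delta) /\
  (forall piF : R -> 'rV[R]_n,
     (forall d : R, 0 < d < 1 / 2 -> stationary_prob (Pmat n eps d) (piF d)) ->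
     (fun x : R => expected_state (piF x)) @ (0 : R)^'+ --> ((2 * n%:R - 1) / 2 : R)).
Proof.
move=> hn /andP[he0 he1] /andP[hd0 hd1].
case: n hn => [|[|[|[|m]]]] // hn.
have hd : 0 < delta < 1 by apply/andP; split; lra.
split.
  exists (\row_(i < m.+4) (wt m.+4 delta i / Sw m.+4 delta)); split.
    exact: stat_exists.
  move=> pi Hpi; apply/rowP => i.
  by rewrite (stat_char hn hd he0 Hpi) mxE.
split.
  move=> pi Hpi; rewrite /expected_state.
  transitivity (\sum_(i < m.+4) ((i : nat).+1)%:R * (wt m.+4 delta i / Sw m.+4 delta)).
    by apply: eq_bigr => i _; rewrite (stat_char hn hd he0 Hpi).
  by apply: exp_eq; apply/andP; split.
move=> piF HF.
have Heq : \forall x \near (0:R)^'+, Gnum m x / Sw m.+4 x = expected_state (piF x).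
  near=> x.
  have hx : 0 < x < 1/2.
    apply/andP; split; near: x; [exact: nbhs_right_gt | apply: nbhs_right_lt; lra].
  have hx1 : 0 < x < 1 by case/andP: hx => ? ?; apply/andP; split; lra.
  rewrite /expected_state /Gnum big_mkord mulr_suml; apply: eq_bigr => i _.
  by rewrite (stat_char hn hx1 he0 (HF x hx)) -mulrA.
apply: cvg_trans (near_eq_cvg Heq) _.
rewrite lim_val; apply: cvg_at_right_filter; exact: G_cvg.
Unshelve. all: by end_near.
Qed.
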